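(* Consider the $D_3$-action on $U(\mathfrak{sl}_2)$ by algebra automorphisms with $\sigma:(E,F,H)\mapsto(\mathbf iF,-\mathbf iE,-H)$ and $\tau:(E,F,H)\mapsto\big(\tfrac{H-\mathbf iE-\mathbf iF}{2},\tfrac{H+\mathbf iE+\mathbf iF}{2},\mathbf iE-\mathbf iF\big)$, and the $D_3$-action on $\Re$ by algebra automorphisms with $\sigma:(A,B,C,\Delta)\mapsto(C,B,A,-\Delta)$ and $\tau:(A,B,C,\Delta)\mapsto(B,C,A,\Delta)$. Then for every $g\in D_3$, $g\circ\sharp=\sharp\circ g$ as maps $\Re\to U(\mathfrak{sl}_2)$.
   Context: All algebras are unital associative over $\mathbb C$, $[x,y]=xy-yx$, $\mathbf i=\sqrt{-1}$. $U(\mathfrak{sl}_2)$ is generated by $E,F,H$ with $[H,E]=2E$, $[H,F]=-2F$, $[E,F]=H$. $\Re$ is generated by $A,B,C,\Delta$ with $[A,B]=[B,C]=[C,A]=2\Delta$ and such that $[A,\Delta]+AC-BA$, $[B,\Delta]+BA-CB$, $[C,\Delta]+CB-AC$ are central. $D_3=\langle\sigma,\tau\mid \sigma^2=\tau^3=(\sigma\tau)^2=1\rangle$ (both displayed actions are known to be well-defined group actions by algebra automorphisms). $\sharp:\Re\to U(\mathfrak{sl}_2)$ is the unique algebra homomorphism with $A\mapsto \frac{(E+F-2)(E+F+2)}{16}$, $B\mapsto\frac{(H-2)(H+2)}{16}$, $C\mapsto\frac{(\mathbf iE-\mathbf iF-2)(\mathbf iE-\mathbf iF+2)}{16}$, $\Delta\mapsto\frac{(H+2)F^2-(H-2)E^2}{64}$.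 *)

(* Defs.v *)
From HB Require Import structures.
From mathcomp Require Import all_boot all_order all_algebra.
From mathcomp Require Import complex.
From mathcomp Require Import reals.
Set Implicit Arguments. Unset Strict Implicit. Unset Printing Implicit Defensive.
Import Order.TTheory GRing.Theory Num.Theory.
Local Open Scope ring_scope.

Section Defs.
Variable C : fieldType.

Definition commr (A : pzRingType) (x y : A) : A := x * y - y * x.

Definition is_alg_hom (A B : algType C) (f : A -> B) : Prop :=
  [/\ forall x y, f (x + y) = f x + f y,
      forall x y, f (x * y) = f x * f y,
      f 1 = 1 &
      forall (c : C) x, f (c *: x) = c *: f x].

Definition sl2_rel (A : algType C) (E F H : A) : Prop :=
  [/\ commr H E = 2%:R *: E, commr H F = - (2%:R *: F) & commr E F = H].

Definition is_Usl2 (U : algType C) (E F H : U) : Prop :=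
  sl2_rel E F H /\
  forall (B : algType C) (e f h : B), sl2_rel e f h ->
    (exists phi : U -> B, is_alg_hom phi /\ [/\ phi E = e, phi F = f & phi H = h])
    /\ (forall phi psi : U -> B, is_alg_hom phi -> is_alg_hom psi ->
          phi E = psi E -> phi F = psi F -> phi H = psi H -> phi =1 psi).

Definition comm4 (A : algType C) (a b c d z : A) : Prop :=
  [/\ commr z a = 0, commr z b = 0, commr z c = 0 & commr z d = 0].

Definition racah_rel (A : algType C) (a b c d : A) : Prop :=
  [/\ commr a b = 2%:R *: d, commr b c = 2%:R *: d & commr c a = 2%:R *: d] /\
  [/\ comm4 a b c d (commr a d + a * c - b * a),
      comm4 a b c d (commr b d + b * a - c * b) &
      comm4 a b c d (commr c d + c * b - a * c)].

Definition is_Racah (Re : algType C) (a b c d : Re) : Prop :=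
  racah_rel a b c d /\
  forall (B : algType C) (a' b' c' d' : B), racah_rel a' b' c' d' ->
    (exists phi : Re -> B, is_alg_hom phi /\
        [/\ phi a = a', phi b = b', phi c = c' & phi d = d'])
    /\ (forall phi psi : Re -> B, is_alg_hom phi -> is_alg_hom psi ->
          phi a = psi a -> phi b = psi b -> phi c = psi c -> phi d = psi d ->
          phi =1 psi).
End Defs.

(* Elements of D_3 = <sigma, tau | ...> are represented by words in the
   generators (true = sigma, false = tau); every element of the finite group
   D_3 is such a word.  The action of the word g1 g2 ... gk is the composite
   act(g1) o act(g2) o ... o act(gk). *)
Definition act_word (T : Type) (s t : T -> T) (w : seq bool) : T -> T :=
  foldr (fun (b : bool) (f : T -> T) => (if b then s else t) \o f) id w.

Definition iC (R : rcfType) : R[i] := Complex 0 1.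

(* Main.v *)
Require Import Defs.
From HB Require Import structures.
From mathcomp Require Import all_boot all_order all_algebra.
From mathcomp Require Import complex.
From mathcomp Require Import reals.
Import Order.TTheory GRing.Theory Num.Theory.
Local Open Scope ring_scope.
Set Implicit Arguments. Unset Strict Implicit.

Section Hom.
Variable K : fieldType.
Variables (A B : algType K) (f : A -> B).
Hypothesis hf : is_alg_hom f.

Lemma hom0 : f 0 = 0.
Proof. case: hf => hD _ _ _. by apply: (@addrI _ (f 0)); rewrite -hD !addr0. Qed.
Lemma homN x : f (- x) = - f x.
Proof. case: hf => hD _ _ _. apply: (@addrI _ (f x)); by rewrite -hD !subrr hom0. Qed.
Lemma homD x y : f (x + y) = f x + f y.
Proof. by case: hf. Qed.
Lemma homZ c x : f (c *: x) = c *: f x.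
Proof. by case: hf. Qed.
Lemma homB x y : f (x - y) = f x - f y.
Proof. case: hf => hD _ _ _. by rewrite hD homN. Qed.
Lemma homn n : f n%:R = n%:R.
Proof. case: hf => hD _ h1 _. elim: n => [|n IH]; first by rewrite hom0.
by rewrite -addn1 !natrD hD IH h1. Qed.
Lemma homc x y : f (commr x y) = commr (f x) (f y).
Proof. case: hf => hD hM _ _. by rewrite /commr homB !hM. Qed.
Lemma homE2 x : f (x ^+ 2) = f x ^+ 2.
Proof. case: hf => hD hM _ _. by rewrite !expr2 hM. Qed.
Lemma hom_racah a b c d : racah_rel a b c d -> racah_rel (f a) (f b) (f c) (f d).
Proof.
case: hf => hD hM h1 hZ.
case=> [[r1 r2 r3] [[s1 s2 s3 s4] [t1 t2 t3 t4] [u1 u2 u3 u4]]].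
split; first by split; rewrite -homc ?r1 ?r2 ?r3 hZ.
split; split; by rewrite -!(homc, hM, homB, hD) ?s1 ?s2 ?s3 ?s4 ?t1 ?t2 ?t3 ?t4 ?u1 ?u2 ?u3 ?u4 hom0.
Qed.
End Hom.

Lemma comp_hom (K : fieldType) (A B D : algType K) (f : A -> B) (g : B -> D) :
  is_alg_hom f -> is_alg_hom g -> is_alg_hom (g \o f).
Proof.
case=> fD fM f1 fZ; case=> gD gM g1 gZ; split => /=.
- by move=> x y; rewrite fD gD.
- by move=> x y; rewrite fM gM.
- by rewrite f1 g1.
- by move=> c x; rewrite fZ gZ.
Qed.

Lemma sq_lem (K : fieldType) (V : algType K) (y z : V) : z = - y ->
  (z - 2%:R) * (z + 2%:R) = (y - 2%:R) * (y + 2%:R).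
Proof.
move=> ->. rewrite -opprD -{2}(opprK 2%:R) -opprD mulrNN.
have c2 : forall u : V, GRing.comm u 2%:R by move=> u; apply: commr_nat.
have h : GRing.comm (y + 2%:R) (y - 2%:R).
  apply: commrB; apply: commr_sym; apply: commrD; try exact: commr_refl; try exact: c2; apply: commr_sym; exact: c2.
exact: h.
Qed.

Lemma commute_gen (K : fieldType) (Re U : algType K) (A B C D : Re)
  (hRe : is_Racah A B C D) (sharp : Re -> U) (hsharp : is_alg_hom sharp)
  (s : U -> U) (t : Re -> Re) (hs : is_alg_hom s) (ht : is_alg_hom t) :
  (2%:R : K) != 0 ->
  s (sharp A) = sharp (t A) -> s (sharp B) = sharp (t B) ->
  s (sharp C) = sharp (t C) -> forall x, s (sharp x) = sharp (t x).
Proof.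
move=> h2 eA eB eC.
case: hRe => rel uniq.
have [_ Un] := uniq U _ _ _ _ (hom_racah hsharp rel).
have hD : D = (2%:R)^-1 *: commr A B.
  case: rel => [[r1 _ _] _]. by rewrite r1 scalerA mulVf // scale1r.
have hp := comp_hom hsharp hs; have hq := comp_hom ht hsharp.
apply: (Un _ _ hp hq) => //=.
have [_ _ _ shZ] := hsharp; have [_ _ _ sZ] := hs; have [_ _ _ tZ] := ht.
by rewrite hD shZ sZ tZ shZ (homc hsharp) (homc hs) (homc ht) (homc hsharp) eA eB.
Qed.

Theorem theorem3p2 (R : realType)
  (U : algType R[i]) (E F H : U) (hU : is_Usl2 E F H)
  (Re : algType R[i]) (A B C D : Re) (hRe : is_Racah A B C D)
  (sharp : Re -> U) (hsharp : is_alg_hom sharp)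
  (hsA : sharp A = (16%:R)^-1 *: ((E + F - 2%:R) * (E + F + 2%:R)))
  (hsB : sharp B = (16%:R)^-1 *: ((H - 2%:R) * (H + 2%:R)))
  (hsC : sharp C = (16%:R)^-1 *:
            ((iC R *: E - iC R *: F - 2%:R) * (iC R *: E - iC R *: F + 2%:R)))
  (hsD : sharp D = (64%:R)^-1 *:
            ((H + 2%:R) * F ^+ 2 - (H - 2%:R) * E ^+ 2))
  (sigU tauU : U -> U) (hsigU : is_alg_hom sigU) (htauU : is_alg_hom tauU)
  (hsigUE : sigU E = iC R *: F) (hsigUF : sigU F = - (iC R *: E))
  (hsigUH : sigU H = - H)
  (htauUE : tauU E = (2%:R)^-1 *: (H - iC R *: E - iC R *: F))
  (htauUF : tauU F = (2%:R)^-1 *: (H + iC R *: E + iC R *: F))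
  (htauUH : tauU H = iC R *: E - iC R *: F)
  (sigR tauR : Re -> Re) (hsigR : is_alg_hom sigR) (htauR : is_alg_hom tauR)
  (hsigRA : sigR A = C) (hsigRB : sigR B = B) (hsigRC : sigR C = A)
  (hsigRD : sigR D = - D)
  (htauRA : tauR A = B) (htauRB : tauR B = C) (htauRC : tauR C = A)
  (htauRD : tauR D = D) :
  forall (g : seq bool) (x : Re),
    act_word sigU tauU g (sharp x) = sharp (act_word sigR tauR g x).
Proof.
have ii : iC R * iC R = -1 by rewrite -expr2; exact: sqr_i.
have h2 : (2%:R : R[i]) != 0 by rewrite pnatr_eq0.
have [_ sM _ sZ] := hsigU; have [_ tM _ tZ] := htauU.
have cs : forall x, sigU (sharp x) = sharp (sigR x).
  apply: (commute_gen hRe hsharp hsigU hsigR h2).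
  - rewrite hsigRA hsC hsA sZ sM !(homn hsigU, homB hsigU, homD hsigU).
    rewrite hsigUE hsigUF; congr (_ *: _); apply: sq_lem.
    by rewrite opprB addrC.
  - rewrite hsigRB hsB sZ sM !(homn hsigU, homB hsigU, homD hsigU) hsigUH.
    by congr (_ *: _); apply: sq_lem.
  - rewrite hsigRC hsC hsA sZ sM !(homn hsigU, homB hsigU, homD hsigU).
    rewrite !(homZ hsigU) hsigUE hsigUF; congr (_ *: _); apply: sq_lem.
    by rewrite scalerN !scalerA ii !scaleN1r opprK opprD addrC.
have ct : forall x, tauU (sharp x) = sharp (tauR x).
  apply: (commute_gen hRe hsharp htauU htauR h2).
  - rewrite htauRA hsB hsA tZ tM !(homn htauU, homB htauU, homD htauU).
    rewrite htauUE htauUF.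
    have -> : (2%:R)^-1 *: (H - iC R *: E - iC R *: F) +
              (2%:R)^-1 *: (H + iC R *: E + iC R *: F) = H.
      rewrite -scalerDr addrACA addNr addr0 addrACA addNr addr0.
      by rewrite -mulr2n -scalerMnr scalerMnl -mulr_natr mulVf // scale1r.
    by [].
  - by rewrite htauRB hsC hsB tZ tM !(homn htauU, homB htauU, homD htauU) htauUH.
  - rewrite htauRC hsA hsC tZ tM !(homn htauU, homB htauU, homD htauU).
    rewrite !(homZ htauU) htauUE htauUF.
    have -> : iC R *: ((2%:R)^-1 *: (H - iC R *: E - iC R *: F)) -
              iC R *: ((2%:R)^-1 *: (H + iC R *: E + iC R *: F)) = E + F.
      rewrite -!addrA -scalerBr -scalerBr opprD addrACA subrr add0r.
      rewrite -!opprD -mulr2n !scalerN -scalerMnr scalerMnl -mulr_natr mulVf // scale1r.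
      by rewrite scalerDr !scalerA ii !scaleN1r opprD !opprK.
    by [].
move=> g x; elim: g => [|b g IH] //=.
by case: b; rewrite IH ?cs ?ct.
Qed.
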